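(* Let $G$ be a finite abelian group with a free Brauer action on the Brauer graph $(\Gamma,\mathfrak o,m)$, let $(\overline\Gamma,\overline{\mathfrak o},\overline m)$ be the Brauer orbit graph, and let $G$ act on the quiver $Q_\Gamma$ by the induced action. Then the orbit quiver $\overline{Q_\Gamma}$ is isomorphic to the quiver $Q_{\overline\Gamma}$ of the Brauer orbit graph, via the map sending the orbit of $v_i$ to $v_{\bar i}$ and the orbit of the arrow corresponding to ''$j$ is the successor of $i$ at $\mu$'' to the arrow corresponding to ''$\bar j$ is the successor of $\bar i$ at $\bar\mu$''.
   Context: Brauer graphs. A Brauer graph $(\Gamma,\mathfrak o,m)$ is a finite connected graph $\Gamma$ (loops and multiple edges allowed) with vertex set $\Gamma_0$, edge set $\Gamma_1$ and at least one edge, together with a multiplicity function $m:\Gamma_0\to\mathbb Z_{\ge 1}$ and, for each vertex $\mu$, a cyclic ordering $\mathfrak o$ of the edges incident with $\mu$. A loop at $\mu$ occurs twice in the cyclic ordering at $\mu$; its two occurrences are regarded as two distinct elements of $\Gamma_1$ (each with its own successor). Edge $j$ is the successor of edge $i$ at $\mu$ if $j$ immediately follows $i$ in the cyclic ordering at $\mu$. The valency $\operatorname{val}(\mu)$ is the number of edges incident with $\mu$, loops counted twice; if $\operatorname{val}(\mu)=1$ the unique edge at $\mu$ is its own successor. An edge $i$ is truncated at its endpoint $\mu$ if $\operatorname{val}(\mu)=1$ and $m(\mu)=1$. The quiver $Q_\Gamma$: if $\Gamma$ is a single non-loop edge whose two endpoints have multiplicity $1$, $Q_\Gamma$ has one vertex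 and one loop. Otherwise $Q_\Gamma$ has a vertex $v_i$ for each $i\in\Gamma_1$ and an arrow $v_i\to v_j$ for each vertex $\mu$ and each pair $(i,j)$ with $j$ the successor of $i$ at $\mu$ and $i$ not truncated at $\mu$. Brauer actions. Let $G$ be a finite abelian group. A Brauer action of $G$ on $(\Gamma,\mathfrak o,m)$ is a faithful action $x\mapsto x^g$ of $G$ on the graph $\Gamma$ (on vertices and edges, compatible with incidence) such that for all $g\in G$: if $j$ is the successor of $i$ at $\mu$ then $j^g$ is the successor of $i^g$ at $\mu^g$, and $m(\mu^g)=m(\mu)$. It is a free Brauer action if $G$ acts freely on $\Gamma_1$. For a free Brauer action, the Brauer orbit graph $(\overline\Gamma,\overline{\mathfrak o},\overline m)$ has as vertices the $G$-orbits $\bar\mu$ of vertices and as edges the $G$-orbits $\bar i$ of edges, $\bar i$ being incident with $\bar\mu$ when $i$ is incident with $\mu$; its cyclic ordering is given by: $\bar j$ is the successor of $\bar i$ at $\bar\mu$ whenever $j$ is the successor of $i$ at $\mu$; and $\overline m(\bar\mu)=\operatorname{val}(\mu)m(\mu)/\operatorname{val}(\bar\mu)$. Induced action and orbit quiver. A free Brauer action induces a free action of $G$ on $Q_\Gamma$: $v_i^g=v_{i^g}$, and the arrow corresponding to ''$j$ is the successor of $i$ at $\mu$'' is sent to the arrow corresponding to ''$j^g$ is the successor of $i^g$ at $\mu^g$''. The orbit quiver $\overline{Q_\Gamma}$ has as vertices the $G$-orbits of vertices of $Q_\Gamma$ and as arrows the $G$-orbits of arrows, the orbit of $a:v\to w$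 being an arrow from the orbit of $v$ to the orbit of $w$. *)

(* Defs.v *)
From HB Require Import structures.
From mathcomp Require Import all_boot all_order all_fingroup.
Set Implicit Arguments. Unset Strict Implicit. Unset Printing Implicit Defensive.

Local Open Scope group_scope.

(*   bV : vertices, bE : edges, bH : edge occurrences ("half-edges"):   *)
(*   every edge has exactly two occurrences (one at each endpoint, both  *)
(*   at the same vertex for a loop).  hv h / he h = vertex / edge of h.  *)
(*   succ h = the occurrence following h in the cyclic ordering at hv h. *)
Record bgraph := BGraph {
  bV : finType; bE : finType; bH : finType;
  hv : bH -> bV; he : bH -> bE; succ : bH -> bH; mult : bV -> nat }.

Definition valency (B : bgraph) (v : bV B) : nat := #|[set h | hv h == v]|.

Definition truncated (B : bgraph) (h : bH B) : bool :=
  (valency (hv h) == 1%N) && (mult (hv h) == 1%N).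

(* Gamma is a single non-loop edge with both endpoints of multiplicity 1 *)
Definition special (B : bgraph) : bool :=
  (#|bE B| == 1%N) && [forall h : bH B, truncated h].

Definition badj (B : bgraph) : rel (bV B) := fun u v =>
  [exists h : bH B, exists h' : bH B,
     [&& h != h', he h == he h', hv h == u & hv h' == v]].

Definition is_brauer (B : bgraph) : Prop :=
  (forall e : bE B, #|[set h | he h == e]| = 2%N) /\
  injective (@succ B) /\
  (forall h : bH B, hv (succ h) = hv h) /\
  (* the occurrences at a vertex form a single succ-cycle (cyclic ordering) *)
  (forall h h', hv h = hv h' -> fconnect (@succ B) h h') /\
  (forall v : bV B, exists h, hv h = v) /\
  (forall u v : bV B, connect (@badj B) u v) /\
  (0 < #|bE B|)%N /\
  (forall v : bV B, 0 < mult v)%N.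

Record quiver := Quiver { qV : finType; qA : finType; qs : qA -> qV; qt : qA -> qV }.

(* The quiver Q_Gamma: vertices v_i = edges i; one arrow v_{he h} -> v_{he (succ h)}
   for every non-truncated occurrence h; in the special case one loop (indexed
   by the unique edge). *)
Definition qarrT (B : bgraph) : finType :=
  ({h : bH B | ~~ truncated h} + {e : bE B | special B})%type.

Definition qsrcB (B : bgraph) (a : qarrT B) : bE B :=
  match a with inl h => he (val h) | inr e => val e end.
Definition qtgtB (B : bgraph) (a : qarrT B) : bE B :=
  match a with inl h => he (succ (val h)) | inr e => val e end.

Definition QB (B : bgraph) : quiver := @Quiver (bE B) (qarrT B) (@qsrcB B) (@qtgtB B).

Definition qarr (B : bgraph) (h : bH B) (Hh : ~~ truncated h) : qA (QB B) :=
  inl (exist _ h Hh).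

Definition orbq (T : finType) (O : T -> {set T}) : finType :=
  {A : {set T} | [exists x, A == O x]}.

Lemma orbq_in (T : finType) (O : T -> {set T}) (x : T) : [exists y, O x == O y].
Proof. by apply/existsP; exists x. Qed.

Definition po (T : finType) (O : T -> {set T}) (x : T) : orbq O :=
  exist _ (O x) (orbq_in O x).

Definition rep (T : finType) (O : T -> {set T}) (A : orbq O) : T :=
  xchoose (existsP (valP A)).

Definition orbf (gT : finGroupType) (T : finType) (f : T -> gT -> T) (G : {set gT})
  (x : T) : {set T} := [set f x g | g in G].

Definition is_act (gT : finGroupType) (T : finType) (G : {set gT}) (f : T -> gT -> T)
  : Prop :=
  (forall x, f x 1 = x) /\
  (forall x g k, g \in G -> k \in G -> f x (g * k) = f (f x g) k).

Definition free_brauer_action (gT : finGroupType) (G : {group gT}) (B : bgraph)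
  (toV : bV B -> gT -> bV B) (toE : bE B -> gT -> bE B) (toH : bH B -> gT -> bH B)
  : Prop :=
  is_act G toV /\ is_act G toE /\ is_act G toH /\
  (forall h g, g \in G -> hv (toH h g) = toV (hv h) g /\ he (toH h g) = toE (he h) g) /\
  (forall h g, g \in G -> succ (toH h g) = toH (succ h) g) /\
  (forall v g, g \in G -> mult (toV v g) = mult v) /\
  (forall g, g \in G -> (forall v, toV v g = v) -> (forall e, toE e g = e) ->
     (forall h, toH h g = h) -> g = 1) /\
  (forall e g, g \in G -> toE e g = e -> g = 1).

Section OrbitGraph.
Variables (gT : finGroupType) (G : {group gT}) (B : bgraph)
  (toV : bV B -> gT -> bV B) (toE : bE B -> gT -> bE B) (toH : bH B -> gT -> bH B).

Definition obV := orbq (orbf toV G).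
Definition obE := orbq (orbf toE G).
Definition obH := orbq (orbf toH G).

Definition ohv (A : obH) : obV := po (orbf toV G) (hv (rep A)).
Definition ohe (A : obH) : obE := po (orbf toE G) (he (rep A)).
Definition osucc (A : obH) : obH := po (orbf toH G) (succ (rep A)).
Definition omult (mu : obV) : nat :=
  (valency (rep mu) * mult (rep mu)) %/ #|[set A : obH | ohv A == mu]|.

Definition orbit_bgraph : bgraph := @BGraph obV obE obH ohv ohe osucc omult.

End OrbitGraph.

Definition orbit_quiver (Q : quiver) (OV : qV Q -> {set qV Q}) (OA : qA Q -> {set qA Q})
  : quiver :=
  @Quiver (orbq OV) (orbq OA)
    (fun A => po OV (qs (rep A))) (fun A => po OV (qt (rep A))).

Definition alab (B : bgraph) (a : qarrT B) : option (bH B) :=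
  match a with inl h => Some (val h) | inr _ => None end.

Definition arrow_orbit (gT : finGroupType) (G : {group gT}) (B : bgraph)
  (toH : bH B -> gT -> bH B) (a : qarrT B) : {set qarrT B} :=
  [set a' | [exists g in G, alab a' == omap (fun h => toH h g) (alab a)]].

(* Main.v *)
Require Import Defs.
From HB Require Import structures.
From mathcomp Require Import all_boot all_order all_fingroup.
Set Implicit Arguments. Unset Strict Implicit. Unset Printing Implicit Defensive.
Local Open Scope group_scope.

Lemma po_rep (T : finType) (O : T -> {set T}) (A : orbq O) : A = po O (rep A).
Proof. apply: val_inj => /=; rewrite /rep; exact: (eqP (xchooseP (existsP (valP A)))). Qed.

Lemma card1_eq (T : finType) (A : {set T}) x y :
  #|A| = 1%N -> x \in A -> y \in A -> x = y.
Proof.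
move/eqP/cards1P=> [z ->]; rewrite !inE => /eqP -> /eqP -> //.
Qed.

Lemma all_card1 (T : finType) (x : T) : (forall y, y = x) -> #|T| = 1%N.
Proof. move=> H; rewrite -(card1 x); apply: eq_card => y; by rewrite !inE (H y) eqxx. Qed.

Section GenOrb.
Variables (T : finType) (O : T -> {set T}).
Hypothesis Orefl : forall x, x \in O x.
Hypothesis Otrans : forall x y, y \in O x -> O y = O x.

Lemma po_eqP x y : y \in O x -> po O y = po O x.
Proof. by move=> H; apply: val_inj => /=; apply: Otrans. Qed.

Lemma po_inv x y : po O x = po O y -> y \in O x.
Proof. by move/(congr1 val) => /= ->. Qed.

Lemma rep_po x : rep (po O x) \in O x.
Proof.
have := Orefl (rep (po O x)).
have -> : O (rep (po O x)) = O x; last by [].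
by have := congr1 val (po_rep (po O x)) => /= <-.
Qed.
End GenOrb.

Section Act.
Variables (gT : finGroupType) (G : {group gT}) (T : finType) (f : T -> gT -> T).
Hypothesis Hf : is_act G f.

Lemma orbf_refl x : x \in orbf f G x.
Proof. by apply/imsetP; exists 1; rewrite ?group1 ?Hf.1. Qed.

Lemma orbf_trans x y : y \in orbf f G x -> orbf f G y = orbf f G x.
Proof.
case/imsetP=> g Hg ->; apply/setP => z; apply/imsetP/imsetP => [[k Hk ->]|[k Hk ->]].
  by exists (g * k); rewrite ?groupM // Hf.2.
exists (g^-1 * k); rewrite ?groupM ?groupV // -Hf.2 ?groupV ?groupM //.
  by rewrite mulgA mulgV mul1g.
by rewrite groupV.
Qed.

Lemma orbf_rep x : exists2 g, g \in G & rep (po (orbf f G) x) = f x g.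
Proof. by have /imsetP[g Hg ->] := rep_po orbf_refl x; exists g. Qed.

Lemma po_orbf x g : g \in G -> po (orbf f G) (f x g) = po (orbf f G) x.
Proof.
move=> Hg; apply: (po_eqP orbf_trans).
by apply/imsetP; exists g.
Qed.

Lemma act_inj g : g \in G -> injective (f^~ g).
Proof.
move=> Hg x y /= E; have := congr1 (f^~ g^-1) E => /=.
by rewrite -!Hf.2 ?groupV // mulgV !Hf.1.
Qed.
End Act.

Lemma allT_one (B : bgraph) : is_brauer B -> (forall h : bH B, truncated h) -> #|bE B| = 1%N.
Proof.
move=> [H2 [_ [_ [_ [_ [Hconn [Hpos _]]]]]]] Ht.
have same_v (h h' : bH B) : hv h = hv h' -> h = h'.
  move=> E; have /andP[/eqP V _] := Ht h.
  by apply: (card1_eq V); rewrite inE ?E eqxx.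
case/card_gt0P: Hpos => e0 _.
have He0 := H2 e0.
have : (0 < #|[set h | he h == e0]|)%N by rewrite He0.
case/card_gt0P => h0 Hh0.
have := cardsD1 h0 [set h | he h == e0]; rewrite He0 Hh0 add1n => -[].
move/esym/eqP/cards1P => [h1 E1].
have Hh1 : h1 \in [set h | he h == e0] :\ h0 by rewrite E1 set11.
have part (k : bH B) : he k = e0 -> k = h0 \/ k = h1.
  move=> Ek; case: (eqVneq k h0) => [->|ne]; first by left.
  right; apply/set1P; rewrite -E1 !inE ne Ek eqxx //.
have He0h0 : he h0 = e0 by move: Hh0; rewrite inE => /eqP.
have He0h1 : he h1 = e0 by move: Hh1; rewrite !inE => /andP[_ /eqP].
pose S v := (v == hv h0) || (v == hv h1).
have step (x y : bV B) : S x -> badj x y -> S y.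
  move=> Sx /existsP[h /existsP[h' /and4P[_ /eqP Ehh /eqP Ex /eqP Ey]]].
  have [k [kk Hk]] : exists k, (k = h0 \/ k = h1) /\ x = hv k.
    by case/orP: Sx => /eqP ->; [exists h0|exists h1]; split; auto.
  have hk : h = k by apply: same_v; rewrite Ex Hk.
  have : he h' = e0 by rewrite -Ehh hk; case: kk => ->.
  by move/part => [] E'; rewrite /S -Ey E' eqxx ?orbT.
have allS (v : bV B) : S v.
  have /connectP[p Hp ->] := Hconn (hv h0) v.
  have : S (hv h0) by rewrite /S eqxx.
  elim: p (hv h0) Hp => [|y p IH] x //= /andP[Hxy Hp] Sx.
  exact: IH Hp (step _ _ Sx Hxy).
apply: (all_card1 (x := e0)) => e.
have : (0 < #|[set h | he h == e]|)%N by rewrite H2.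
case/card_gt0P => k; rewrite inE => /eqP <-.
by case/orP: (allS (hv k)) => /eqP /same_v ->.
Qed.

Section Main.
Variables (gT : finGroupType) (G : {group gT}) (B : bgraph)
  (toV : bV B -> gT -> bV B) (toE : bE B -> gT -> bE B) (toH : bH B -> gT -> bH B).
Hypothesis HB : is_brauer B.
Hypothesis HA : @free_brauer_action gT G B toV toE toH.

Let Bb := @orbit_bgraph gT G B toV toE toH.
Let OV := orbf toV G.
Let OE := orbf toE G.
Let OH := orbf toH G.

Let aV : is_act G toV. Proof. by case: HA. Qed.
Let aE : is_act G toE. Proof. by case: HA => _ []. Qed.
Let aH : is_act G toH. Proof. by case: HA => _ [_ []]. Qed.
Let Hinc : forall h g, g \in G -> hv (toH h g) = toV (hv h) g /\ he (toH h g) = toE (he h) g.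
Proof. by case: HA => _ [_ [_ []]]. Qed.
Let Hsucc : forall h g, g \in G -> succ (toH h g) = toH (succ h) g.
Proof. by case: HA => _ [_ [_ [_ []]]]. Qed.
Let Hmult : forall v g, g \in G -> mult (toV v g) = mult v.
Proof. by case: HA => _ [_ [_ [_ [_ []]]]]. Qed.

Lemma val_le v g : g \in G -> (valency v <= valency (toV v g))%N.
Proof.
move=> Hg; rewrite /valency -(card_imset _ (act_inj aH Hg)).
apply: subset_leq_card; apply/subsetP => x /imsetP[h]; rewrite !inE => /eqP Eh ->.
by rewrite (Hinc h Hg).1 Eh.
Qed.

Lemma val_eq v g : g \in G -> valency (toV v g) = valency v.
Proof.
move=> Hg; apply/eqP; rewrite eqn_leq val_le // andbT.
have := val_le (toV v g) (groupVr Hg).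
by rewrite -aV.2 ?groupV // mulgV aV.1.
Qed.

Lemma trunc_po (h : bH B) : truncated (po OH h : bH Bb) = truncated h.
Proof.
rewrite /truncated /=.
have hM : ohv toV (po OH h) = po OV (hv h).
  rewrite /ohv; have [g Hg ->] := orbf_rep aH h.
  by rewrite (Hinc h Hg).1 po_orbf.
rewrite hM.
set vb := valency (B:=Bb) (po OV (hv h)).
have vb1 : (1 <= vb)%N.
  by apply/card_gt0P; exists (po OH h); rewrite inE /= hM.
have vbn : (vb <= valency (hv h))%N.
  apply: (leq_trans _ (leq_imset_card (po OH) [set k | hv k == hv h])).
  apply: subset_leq_card; apply/subsetP => A; rewrite inE => /eqP EA.
  have EA2 : po OV (hv (rep A)) = po OV (hv h) := EA.
  have := po_inv (orbf_refl aV) EA2.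
  case/imsetP => k Hk Ek.
  apply/imsetP; exists (toH (rep A) k); first by rewrite inE (Hinc _ Hk).1 Ek.
  by rewrite {1}(po_rep A) po_orbf.
have -> : omult toH (po OV (hv h)) = (valency (hv h) * mult (hv h)) %/ vb.
  rewrite /omult; have [g Hg ->] := orbf_rep aV (hv h).
  by rewrite val_eq // Hmult.
have n1 : (1 <= valency (hv h))%N by apply/card_gt0P; exists h; rewrite inE.
case: (eqVneq vb 1%N) => [->|ne]; first by rewrite divn1 muln_eq1.
case: (eqVneq (valency (hv h)) 1%N) => [E|]; last by [].
by move: ne; rewrite eqn_leq vb1 -E vbn.
Qed.

Lemma specB : special B -> special Bb.
Proof.
case/andP => /eqP c1 /forallP Ht; apply/andP; split.
  have : (0 < #|bE B|)%N by rewrite c1.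
  case/card_gt0P => e0 _.
  have eq1 (x y : bE B) : x = y.
    by move: (leqnn 1); rewrite -{1}c1 => /fintype_le1P H; rewrite (H x) (H y).
  apply/eqP; apply: (all_card1 (x := po OE e0)) => A.
  by rewrite {1}(po_rep A) (eq1 (rep A) e0).
apply/forallP => A; rewrite {1}(po_rep A) trunc_po; exact: Ht.
Qed.

Lemma specBb : special Bb -> special B.
Proof.
case/andP => _ /forallP Ht.
have Ht' (h : bH B) : truncated h by rewrite -trunc_po; exact: Ht.
apply/andP; split; [apply/eqP; exact: allT_one HB Ht' | exact/forallP].
Qed.

Definition optact (o : option (bH B)) (g : gT) := omap (toH^~ g) o.
Lemma aO : is_act G optact.
Proof.
split=> [[h|]|[h|] g k Hg Hk] //=; first by rewrite aH.1.
by rewrite aH.2.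
Qed.

Let AO := arrow_orbit G toH.

Lemma aoE a : AO a = [set a' | alab a' \in orbf optact G (alab a)].
Proof.
apply/setP => a'; rewrite !inE; apply/existsP/imsetP.
  by case=> g /andP[Hg /eqP E]; exists g.
by case=> g Hg E; exists g; rewrite Hg E /=.
Qed.

Lemma ao_refl a : a \in AO a.
Proof. by rewrite aoE inE; exact: (orbf_refl aO). Qed.

Lemma ao_trans a a' : a' \in AO a -> AO a' = AO a.
Proof. by rewrite !aoE inE => /(orbf_trans aO) ->. Qed.

Lemma ao_rep_inl (k : {h : bH B | ~~ truncated h}) :
  exists h', exists2 g, g \in G & rep (po AO (inl k : qarrT B)) = inl h' /\ val h' = toH (val k) g.
Proof.
have := rep_po ao_refl (inl k : qarrT B); rewrite aoE inE.
case: (rep _) => [h'|e] /imsetP[g Hg /= E] //.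
by exists h'; exists g => //; split => //; case: E.
Qed.

Lemma ao_rep_inr (e : {e : bE B | special B}) :
  exists e', rep (po AO (inr e : qarrT B)) = inr e'.
Proof.
have := rep_po ao_refl (inr e : qarrT B); rewrite aoE inE.
case: (rep _) => [h'|e'] /imsetP[g Hg /= E] //.
by exists e'.
Qed.

Lemma ntr (k : {h : bH B | ~~ truncated h}) : ~~ truncated (po OH (val k) : bH Bb).
Proof. rewrite trunc_po; exact: (valP k). Qed.

Lemma ntr' (A : {A : bH Bb | ~~ truncated A}) : ~~ truncated (rep (val A)).
Proof. by have := valP A; rewrite {1}(po_rep (val A)) trunc_po. Qed.

Definition f1 (A : orbq AO) : qarrT Bb :=
  match rep A with
  | inl k => inl (exist _ (po OH (val k) : bH Bb) (ntr k))
  | inr e => inr (exist _ (po OE (val e) : bE Bb) (specB (valP e)))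
  end.

Definition g1 (x : qarrT Bb) : orbq AO :=
  match x with
  | inl A => po AO (inl (exist _ (rep (val A)) (ntr' A)))
  | inr e => po AO (inr (exist _ (rep (val e)) (specBb (valP e))))
  end.

Lemma f1_inl k : f1 (po AO (inl k)) = inl (exist _ (po OH (val k) : bH Bb) (ntr k)).
Proof.
have [h' [g Hg [E1 E2]]] := ao_rep_inl k.
rewrite /f1 E1; congr inl; apply: val_inj => /=.
by rewrite E2 po_orbf.
Qed.

Lemma g1f1 : cancel f1 g1.
Proof.
move=> A; apply: (etrans _ (esym (po_rep A))); rewrite /f1.
case: (rep A) => [k|e] /=; apply: (po_eqP ao_trans); rewrite aoE inE /=.
  have [g Hg ->] := orbf_rep aH (val k).
  by apply/imsetP; exists g.
exact: (orbf_refl aO).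
Qed.

Lemma f1g1 : cancel g1 f1.
Proof.
case=> [A|e] /=.
  rewrite f1_inl; congr inl; apply: val_inj => /=; exact: esym (po_rep _).
have [e' E] := ao_rep_inr (exist _ (rep (val e)) (specBb (valP e))).
rewrite /f1 E; congr inr; apply: val_inj => /=.
case/andP: (valP e) => /eqP c1 _.
by move: (leqnn 1); rewrite -{1}c1 => /fintype_le1P H; exact: (H (val e)).
Qed.

Lemma he_po x : ohe toE (po OH x) = po OE (he x).
Proof.
rewrite /ohe; have [g Hg ->] := orbf_rep aH x.
by rewrite (Hinc x Hg).2 po_orbf.
Qed.

Lemma succ_po x : osucc (po OH x) = po OH (succ x).
Proof.
rewrite /osucc; have [g Hg ->] := orbf_rep aH x.
by rewrite Hsucc // po_orbf.
Qed.

End Main.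

Theorem proposition2p8 (gT : finGroupType) (G : {group gT}) (B : bgraph)
  (toV : bV B -> gT -> bV B) (toE : bE B -> gT -> bE B) (toH : bH B -> gT -> bH B) :
  abelian G -> is_brauer B -> @free_brauer_action gT G B toV toE toH ->
  let Bb := @orbit_bgraph gT G B toV toE toH in
  let OQ := orbit_quiver (Q := QB B) (orbf toE G) (arrow_orbit G toH) in
  exists (f0 : qV OQ -> qV (QB Bb)) (f1 : qA OQ -> qA (QB Bb)),
    [/\ bijective f0, bijective f1,
        (forall a, qs (f1 a) = f0 (qs a)) /\ (forall a, qt (f1 a) = f0 (qt a)),
        (forall e : bE B, f0 (po (orbf toE G) e) = (po (orbf toE G) e : bE Bb)) &
        (forall h : bH B, truncated (po (orbf toH G) h : bH Bb) = truncated h) /\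
        (forall (h : bH B) (Hh : ~~ truncated h)
                (Hb : ~~ truncated (po (orbf toH G) h : bH Bb)),
           f1 (po (arrow_orbit G toH) (qarr Hh)) = qarr Hb)].
Proof.
move=> _ HB HA Bb OQ.
exists id, (f1 HA); split.
- by exists id.
- by exists (g1 HB HA); [exact: g1f1 | exact: f1g1].
- split=> a /=; rewrite /f1; case: (rep a) => [k|e] //=.
    exact: he_po HA _.
  by rewrite (succ_po HA) (he_po HA).
- by [].
- split; first exact: trunc_po HA.
  move=> h Hh Hb; rewrite /qarr f1_inl; congr inl; exact: val_inj.
Qed.
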